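(* For every integer $n>0$, $\phi(e_n)=t$.
   Context: $e_n=\sum_{i_1<i_2<\dots<i_n,\ i_j\in\mathbb{Z}}x_{i_1}x_{i_2}\cdots x_{i_n}$ in commuting variables $x_i$, $i\in\mathbb{Z}$. A signed graph is a finite graph (loops and multiple edges allowed) with $\mathrm{sgn}:E\to\{+,-\}$; a coloring $\kappa:V\to\mathbb{Z}$ is proper if $\kappa(u)\ne\mathrm{sgn}(e)\kappa(v)$ for every edge $e$ with endpoints $u,v$. An orientation assigns to each half-edge (a loop has two) an arrow toward or away from the vertex, such that on a positive edge exactly one of the two arrows points toward its vertex and on a negative edge both point toward or both point away. A cycle is a closed walk in which, considering only the edges of the walk, every vertex of the walk has at least one arrow pointing into it and one pointing out of it; an orientation is acyclic if it has no cycle; a sink is a vertex all of whose incident arrows point toward it (an isolated vertex is a sink). A signed poset is an acyclic orientation $P$ of a signed graph. A proper coloring $\kappa$ preserves $P$ if for every edge $e$ and each endpoint $v$ of $e$, with $u$ the other endpoint ($u=v$ for a loop), the arrow of $P$ at the incidence of $e$ with $v$ points toward $v$ iff $\kappa(v)>\mathrm{sgn}(e)\kappa(u)$. $Y_P=\sum_\kappa\prod_v x_{\kappa(v)}$ over proper colorings preserving $P$; $\mathbb{Y}$ is the $\mathbb{Q}$-span of all $Y_P$ (it is closed under products and contains each $e_n$). $\phi:\mathbb{Y}\to\mathbb{Q}[t]$ is the (unique) $\mathbb{Q}$-linear map with $\phi(Y_P)=t^{\mathrm{sink}(P)}$, $\mathrm{sink}(P)$ the number of sinks of $P$ (its existence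 is established in the paper). *)

(* Defs.v *)
From mathcomp Require Import all_boot all_algebra.

Import GRing.Theory Num.Theory.
Local Open Scope ring_scope.

(* A finite signed graph: vertices 'I_nv, edges 'I_ne (loops and multiple
   edges allowed); edge e has endpoints (ends e).1, (ends e).2 and sign
   positive iff epos e. *)
Record sgraph := SGraph {
  nv : nat;
  ne : nat;
  ends : 'I_ne -> 'I_nv * 'I_nv;
  epos : 'I_ne -> bool }.

(* half-edges: (e, false) is the incidence of e with (ends e).1,
   (e, true) the incidence with (ends e).2 (a loop has two). *)
Definition hedge (G : sgraph) := ('I_(ne G) * bool)%type.

Definition hv (G : sgraph) (h : hedge G) : 'I_(nv G) :=
  if h.2 then (ends G h.1).2 else (ends G h.1).1.

(* An orientation: for each edge, whether the arrow at the first / second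
   incidence points toward its vertex. *)
Definition orient (G : sgraph) := 'I_(ne G) -> bool * bool.

Definition harr (G : sgraph) (o : orient G) (h : hedge G) : bool :=
  if h.2 then (o h.1).2 else (o h.1).1.

Definition is_orientation (G : sgraph) (o : orient G) : Prop :=
  forall e, ((o e).1 == (o e).2) = ~~ epos G e.

(* closed walks: a nonempty cyclic sequence of traversal steps (e, b),
   step (e,b) goes from hv G (e,b) to hv G (e, ~~ b). *)
Definition is_closed_walk (G : sgraph) (w : seq (hedge G)) : bool :=
  (w != [::]) &&
  cycle (fun x y : hedge G => hv G (x.1, ~~ x.2) == hv G y) w.

Definition is_cycle (G : sgraph) (o : orient G) (w : seq (hedge G)) : Prop :=
  is_closed_walk G w /\
  forall x, x \in w ->
    (exists h : hedge G, h.1 \in map fst w /\ hv G h = hv G x /\ harr G o h)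
    /\ (exists h : hedge G, h.1 \in map fst w /\ hv G h = hv G x /\ ~~ harr G o h).

Definition acyclic (G : sgraph) (o : orient G) : Prop :=
  forall w : seq (hedge G), ~ is_cycle G o w.

Definition is_sposet (G : sgraph) (o : orient G) : Prop :=
  is_orientation G o /\ acyclic G o.

Definition is_sink (G : sgraph) (o : orient G) (v : 'I_(nv G)) : bool :=
  [forall h : hedge G, (hv G h == v) ==> harr G o h].

Definition nsinks (G : sgraph) (o : orient G) : nat :=
  #|[pred v : 'I_(nv G) | is_sink G o v]|.

Definition sgnmul (G : sgraph) (e : 'I_(ne G)) (x : int) : int :=
  if epos G e then x else - x.

Definition proper (G : sgraph) (k : 'I_(nv G) -> int) : bool :=
  [forall e : 'I_(ne G), k (ends G e).1 != sgnmul G e (k (ends G e).2)].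

Definition preserves (G : sgraph) (o : orient G) (k : 'I_(nv G) -> int) : bool :=
  [forall h : hedge G,
     harr G o h == (sgnmul G h.1 (k (hv G (h.1, ~~ h.2))) < k (hv G h))].

(* Formal power series in commuting variables x_i (i : int), represented by
   their coefficient function on monomials; a monomial x_{i1}...x_{ik} is
   represented by any sequence [:: i1; ...; ik] (all series considered are
   invariant under permutation of the sequence). *)
Definition series := seq int -> rat.

(* number of colorings k : V -> Z, proper and preserving P, whose monomial
   prod_v x_{k v} is the monomial s.  Colorings with values in s are encoded
   through indices into undup s. *)
Definition Ycoef (G : sgraph) (o : orient G) (s : seq int) : nat :=
  #|[pred f : {ffun 'I_(nv G) -> 'I_(size (undup s))} |
     let k := fun v => nth 0 (undup s) (f v) in
     [&& perm_eq [seq k v | v <- enum 'I_(nv G)] s, proper G k & preserves G o k]]|.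

Definition Yser (G : sgraph) (o : orient G) : series :=
  fun s => (Ycoef G o s)%:R.

Definition eser (n : nat) : series :=
  fun s => if (size s == n) && uniq s then 1 else 0.

Record term := Term { tc : rat; tG : sgraph; tO : orient tG }.

Definition lincomb (F : seq term) : series :=
  fun s => \sum_(t <- F) tc t * Yser (tG t) (tO t) s.

Definition phival (F : seq term) : {poly rat} :=
  \sum_(t <- F) tc t *: 'X^(nsinks (tG t) (tO t)).

Fixpoint all_sposets (F : seq term) : Prop :=
  match F with
  | [::] => True
  | t :: F' => is_sposet (tG t) (tO t) /\ all_sposets F'
  end.

(* Main.v *)
Require Import Defs.
From mathcomp Require Import all_boot all_algebra.
Local Open Scope ring_scope.
From mathcomp Require Import all_order.
From Stdlib Require Import FunctionalExtensionality.
Import Order.TTheory GRing.Theory Num.Theory.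

Definition pathG (k : nat) : sgraph :=
  @SGraph k.+1 k (fun i : 'I_k => (widen_ord (leqnSn k) i, lift ord0 i)) (fun _ => true).
Definition pathO (k : nat) : orient (pathG k) := fun _ => (false, true).

Lemma preserves_path k (c : 'I_k.+1 -> int) :
  preserves (pathG k) (pathO k) c =
  [forall e : 'I_k, c (widen_ord (leqnSn k) e) < c (lift ord0 e)].
Proof.
apply/forallP/forallP => H e.
  by have := H (e, true); rewrite /harr /hv /sgnmul /= => /eqP <-.
case: e => e [] /=; rewrite /harr /hv /sgnmul /=; have := H e.
  by move=> ->.
by move=> h; rewrite lt_gtF.
Qed.

Lemma proper_path k (c : 'I_k.+1 -> int) :
  preserves (pathG k) (pathO k) c -> Defs.proper (pathG k) c.
Proof.
rewrite preserves_path => /forallP H; apply/forallP => e.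
by rewrite /sgnmul /= lt_eqF.
Qed.

Lemma sorted_path k (c : 'I_k.+1 -> int) :
  preserves (pathG k) (pathO k) c -> sorted <%O [seq c v | v <- enum 'I_k.+1].
Proof.
rewrite preserves_path => /forallP H.
have E : forall j, (j < k.+1)%N -> nth 0 [seq c v | v <- enum 'I_k.+1] j = c (inord j).
  move=> j hj; rewrite (nth_map ord0) ?size_enum_ord //.
  by congr c; apply: ord_inj; rewrite nth_enum_ord // inordK.
apply/(sortedP (0:int)) => i.
rewrite size_map size_enum_ord ltnS => Hi.
rewrite !E // 1?ltnW //.
have := H (Ordinal Hi).
have -> : widen_ord (leqnSn k) (Ordinal Hi) = inord i.
  by apply: ord_inj; rewrite /= inordK //; exact: ltnW.
have -> // : lift ord0 (Ordinal Hi) = inord i.+1.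
by apply: ord_inj; rewrite /= inordK.
Qed.

Lemma Ycoef_path k s : Ycoef (pathG k) (pathO k) s = ((size s == k.+1) && uniq s)%N.
Proof.
rewrite /Ycoef.
set A := [pred f | _].
have memA : forall f, f \in A -> perm_eq [seq nth 0 (undup s) (f v) | v <- enum 'I_k.+1] s
   /\ sorted <%O [seq nth 0 (undup s) (f v) | v <- enum 'I_k.+1].
  move=> f; rewrite inE /= => /and3P [Hp _ Hs]; split => //.
  exact: (sorted_path _ _ Hs).
have nthE : forall (c : 'I_k.+1 -> int) (v : 'I_k.+1), nth 0 [seq c v | v <- enum 'I_k.+1] v = c v.
  by move=> c v; rewrite (nth_map ord0) ?size_enum_ord // nth_ord_enum.
have le1 : (#|A| <= 1)%N.
  apply/card_le1_eqP => f g /memA [Pf Sf] /memA [Pg Sg].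
  have E := lt_sorted_eq Sf Sg (fun x => etrans (perm_mem Pf x) (esym (perm_mem Pg x))).
  apply/ffunP => v; apply: ord_inj.
  have := congr1 (fun l => nth 0 l v) E; rewrite /= !nthE => /(congr1 (index ^~ (undup s))).
  by rewrite !index_uniq ?undup_uniq.
case: (boolP ((size s == k.+1) && uniq s)) => [/andP [/eqP Hsz Hu] | Hn]; last first.
  apply: eq_card0 => f; apply/negbTE/negP => /memA [P S].
  move: Hn; rewrite -(perm_size P) size_map size_enum_ord eqxx -(perm_uniq P) /=.
  by move: S; rewrite lt_sorted_uniq_le => /andP [-> _].
apply/eqP; rewrite eqn_leq le1 /=; apply/card_gt0P.
set t := sort <=%O s.
have szt : size t = k.+1 by rewrite size_sort.
have Hidx : forall v : 'I_k.+1, (index (nth (0:int) t v) (undup s) < size (undup s))%N.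
  by move=> v; rewrite index_mem mem_undup -(mem_sort <=%O) mem_nth // szt.
exists [ffun v => Ordinal (Hidx v)].
have K : forall v, nth 0 (undup s) ([ffun v => Ordinal (Hidx v)] v) = nth 0 t v.
  by move=> v; rewrite ffunE /= nth_index // mem_undup -(mem_sort <=%O) mem_nth // szt.
have St : sorted <%O t by rewrite lt_sorted_uniq_le sort_uniq Hu sort_le_sorted.
have Pr : preserves (pathG k) (pathO k) (fun v => nth 0 (undup s) ([ffun v => Ordinal (Hidx v)] v)).
  rewrite preserves_path; apply/forallP => e /=; rewrite !K.
  apply: (sorted_ltn_nth lt_trans) => //; rewrite ?inE ?szt /=.
  - by apply: ltnW; rewrite ltnS.
  - exact: (ltn_ord (lift ord0 e)).

rewrite inE /=; apply/and3P; split; [| exact: (proper_path _ _ Pr) | exact: Pr].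
rewrite (eq_map K).
have -> : [seq nth 0 t v | v : 'I_k.+1 <- enum 'I_k.+1] = t.
  apply: (@eq_from_nth _ 0); first by rewrite size_map size_enum_ord szt.
  move=> i; rewrite size_map size_enum_ord => Hi.
  by rewrite (nth_map ord0) ?size_enum_ord // nth_enum_ord.
by rewrite perm_sort perm_refl.
Qed.

Lemma acyclic_path k : acyclic (pathG k) (pathO k).
Proof.
move=> w [/andP [wn0 cyc] H].
have [x xw xm] : exists2 x, x \in w & forall y, y \in w -> (val y.1 <= val x.1)%N.
  clear -wn0; elim: w wn0 => // a w IH _.
  case: w IH => [|b w] IH.
    by exists a; rewrite ?inE // => y; rewrite inE => /eqP ->.
  have [x xw xm] := IH isT.
  case: (leqP (val a.1) (val x.1)) => h.
    exists x; first by rewrite inE xw orbT.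
    by move=> y; rewrite inE => /orP [/eqP -> // | /xm].
  exists a; first by rewrite inE eqxx.
  move=> y; rewrite inE => /orP [/eqP -> // | /xm yx].
  exact: (leq_trans yx (ltnW h)).
have [z zw hz] : exists2 z, z \in w & hv (pathG k) z = lift ord0 x.1.
  case: x xw xm => e [] xw xm; first by exists (e, true).
  exists (next w (e, false)); first by rewrite mem_next.
  by have /eqP <- := next_cycle cyc xw.
have [_ [[e' b'] [hw [hh ha]]]] := H z zw.
move: ha hh; rewrite /harr /= => ha.
move: hw; case: b' ha => // _ hw.
rewrite hz /= => /(congr1 val) /= he.
have [y yw ye] := mapP hw.
have := xm y yw; rewrite -ye /= he /bump leq0n add1n ltnn //.
Qed.

Lemma nsinks_path k : nsinks (pathG k) (pathO k) = 1%N.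
Proof.
apply: (@eq_card1 _ ord_max) => v; rewrite inE /is_sink /=.
apply/forallP/eqP => [H | ->].
  apply: ord_inj => /=; have := ltn_ord v; rewrite ltnS leq_eqVlt => /orP [/eqP // | vk].
  by have := H (Ordinal vk, false); rewrite /harr /hv /= (_ : widen_ord _ _ = v) ?eqxx //; apply: ord_inj.
case => e []; rewrite /harr /hv /= ?implybT //; apply/implyP => /eqP /(congr1 val) /= ev.
by move: (ltn_ord e); rewrite ev ltnn.
Qed.

Theorem lemma6p9 (phi : series -> {poly rat})
  (Hphi : forall F : seq term,
     all_sposets F ->
     phi (lincomb F) = phival F)
  (n : nat) (Hn : (0 < n)%N) :
  phi (eser n) = 'X.
Proof.
case: n Hn => // k _.
have E : eser k.+1 = lincomb [:: Term 1 (pathG k) (pathO k)].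
  apply: functional_extensionality => s.
  rewrite /lincomb big_cons big_nil addr0 mul1r /Yser Ycoef_path /eser /=.
  by case: ifP.
rewrite E Hphi; last first.
  split => //; split; last exact: acyclic_path.
  by move=> e.
by rewrite /phival big_cons big_nil addr0 scale1r /= nsinks_path expr1.
Qed.
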